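(* Let $S\subset\mathbb{R}^q$ be compact and $\ell:\mathbb{R}^q\times\mathbb{R}^q\to(0,1)$ continuous. Let $s\in S$ and let $(\xi_k)_{k\in\mathbb{N}}\subset\mathbb{R}^q$ be $n$-periodic (i.e. $\xi_{k+n}=\xi_k$ for all $k$). Let $d_1,d_2,\dots\in\{0,1\}$ be independent random variables with $\Pr(d_k=1)=\ell(s,\xi_k)$. Let $c_1,\dots,c_M\in S$ be distinct, let $\hat p_0:\{1,\dots,M\}\to(0,1)$ with $\sum_i\hat p_0(i)=1$, and define $\hat p_k$ by $$\hat p_k(i\mid d_{1:k};\xi_{1:k})=\frac{g(d_k\mid c_i;\xi_k)\,\hat p_{k-1}(i\mid d_{1:k-1};\xi_{1:k-1})}{\sum_{j=1}^M g(d_k\mid c_j;\xi_k)\,\hat p_{k-1}(j\mid d_{1:k-1};\xi_{1:k-1})},$$ where $g(d\mid x;\xi)=\ell(x,\xi)^d(1-\ell(x,\xi))^{1-d}$. Suppose $c_j=s$ for some $j$, and suppose $$\bigcap_{k=1}^n\{x\in S:\ell(x,\xi_k)=\ell(s,\xi_k)\}=\{s\}.$$ Then $\hat p_k(j\mid d_{1:k};\xi_{1:k})\to 1$ almost surely. *)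

(* Defs.v *)
From HB Require Import structures.
From mathcomp Require Import all_boot all_order all_algebra.
From mathcomp Require Import all_classical all_reals all_analysis.
Set Implicit Arguments. Unset Strict Implicit. Unset Printing Implicit Defensive.
Import Order.TTheory GRing.Theory Num.Theory numFieldNormedType.Exports.
Local Open Scope ring_scope.
Local Open Scope classical_set_scope.

Definition lik (R : realType) (q : nat) (l : 'rV[R]_q -> 'rV[R]_q -> R)
  (b : bool) (x xi : 'rV[R]_q) : R :=
  if b then l x xi else 1 - l x xi.

(* posterior p_k(i | d_{1:k}; xi_{1:k}); observations d_k, xi_k indexed from 1 *)
Fixpoint posterior (R : realType) (q M : nat) (l : 'rV[R]_q -> 'rV[R]_q -> R)
  (c : 'I_M -> 'rV[R]_q) (p0 : 'I_M -> R) (xi : nat -> 'rV[R]_q)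
  (dd : nat -> bool) (k : nat) : 'I_M -> R :=
  match k with
  | 0 => p0
  | k'.+1 => fun i =>
      lik l (dd k'.+1) (c i) (xi k'.+1) * posterior l c p0 xi dd k' i /
      \sum_(j < M) lik l (dd k'.+1) (c j) (xi k'.+1) * posterior l c p0 xi dd k' j
  end.

Definition mutually_independent (d : measure_display) (T : measurableType d)
  (R : realType) (P : probability T R) (d' : measure_display)
  (U : measurableType d') (X : nat -> T -> U) : Prop :=
  forall (F : seq nat) (B : nat -> set U),
    uniq F -> (forall k, measurable (B k)) ->
    P (\bigcap_(k in [set k | k \in F]) (X k @^-1` B k)) =
    (\prod_(k <- F) P (X k @^-1` B k))%E.

(* Main.v *)
Require Import Defs.
From HB Require Import structures.
From mathcomp Require Import all_boot all_order all_algebra.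
From mathcomp Require Import all_classical all_reals all_analysis.
From mathcomp Require Import ring lra.
Import Order.TTheory GRing.Theory Num.Theory numFieldNormedType.Exports.
Local Open Scope ring_scope.
Local Open Scope classical_set_scope.
Set Implicit Arguments. Unset Strict Implicit. Unset Printing Implicit Defensive.

Section prodmeas.
Context (R : realType) (dsp : measure_display) (T : measurableType dsp)
  (P : probability T R) (dv : nat -> T -> bool) (pr : nat -> bool -> R).
Hypothesis Hind : mutually_independent P (fun k => dv k.+1).
Hypothesis Hmeas : forall k, measurable_fun setT (dv k).
Hypothesis Hp : forall k b, P [set t | dv k.+1 t = b] = (pr k b)%:E.

Definition Vt N t : {ffun 'I_N -> bool} := [ffun i : 'I_N => dv i.+1 t].

Definition Bf N (f : {ffun 'I_N -> bool}) (k : nat) : set bool :=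
  if insub k is Some i then [set f i] else setT.

Lemma Vt_bigcap N f : [set t | Vt N t = f] =
  \bigcap_(k in [set k | k \in iota 0 N]) ((fun t => dv k.+1 t) @^-1` Bf f k).
Proof.
apply/seteqP; split => t /=.
  move=> <- k /=; rewrite mem_iota add0n /= => kN.
  by rewrite /Bf insubT /= ffunE.
move=> H; apply/ffunP => i; rewrite ffunE.
have := H (val i); rewrite /= /Bf valK.
by apply; rewrite /= mem_iota add0n ltn_ord.
Qed.

Lemma mdv k (B : set bool) : measurable ((fun t => dv k t) @^-1` B).
Proof.
have mB : measurable B by [].
have := Hmeas k measurableT mB.
by rewrite setTI.
Qed.

Lemma mVt N f : measurable [set t | Vt N t = f].
Proof.
by rewrite Vt_bigcap; apply: bigcap_measurableType => k _; apply: mdv.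
Qed.

Lemma probV N f : P [set t | Vt N t = f] = (\prod_(i < N) pr i (f i))%:E.
Proof.
rewrite Vt_bigcap Hind ?iota_uniq // -prodEFin.
transitivity (\prod_(0 <= k < N) (pr k (if insub k is Some j then f j else true))%:E)%E.
  rewrite /index_iota subn0; apply: eq_big_seq => k; rewrite mem_iota add0n /= => kN.
  rewrite /Bf insubT /=.
  have -> : (fun t => dv k.+1 t) @^-1` [set f (Ordinal kN)] = [set t | dv k.+1 t = f (Ordinal kN)] by [].
  by rewrite Hp.
by rewrite big_mkord; apply: eq_bigr => i _; rewrite valK.
Qed.

Lemma probQ N (Q : pred {ffun 'I_N -> bool}) :
  P [set t | Q (Vt N t)] = (\sum_(f | Q f) \prod_(i < N) pr i (f i))%:E.
Proof.
have -> : [set t | Q (Vt N t)] = \bigcup_(f in [set` Q]) [set t | Vt N t = f].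
  apply/seteqP; split => t /=.
    by move=> Qt; exists (Vt N t).
  by move=> [f /= Qf ->].
rewrite measure_fin_bigcup; first last.
- by move=> f _; apply: mVt.
- by move=> f g _ _ [t [Hf Hg]]; rewrite -Hf -Hg.
- by apply: (@finite_finset {ffun 'I_N -> bool}).
rewrite -(bigfs _ (enum_uniq (pred_of_simpl predT))); last first.
  by move=> f _; rewrite mem_enum.
rewrite big_enum_cond /= -sumEFin; apply: eq_big => // f _.
by rewrite probV.
Qed.

Lemma markovV (N : nat) (u : nat -> bool -> R) (a : R) : 0 < a ->
  (forall k b, 0 <= u k b) -> (forall k b, 0 <= pr k b) ->
  (P [set t | (a <= \prod_(i < N) u i (dv i.+1 t))%R] <=
   (a^-1 * \prod_(i < N) \sum_(b : bool) pr i b * u i b)%:E)%E.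
Proof.
move=> a0 u0 pr0.
pose Q := fun f : {ffun 'I_N -> bool} => a <= \prod_(i < N) u i (f i).
have -> : [set t | (a <= \prod_(i < N) u i (dv i.+1 t))%R] = [set t | Q (Vt N t)].
  have E t : \prod_(i < N) u i (Vt N t i) = \prod_(i < N) u i (dv i.+1 t).
    by apply: eq_bigr => i _; rewrite ffunE.
  by apply/seteqP; split => t /=; rewrite /Q E.
rewrite probQ lee_fin bigA_distr_bigA /= mulr_sumr.
rewrite [X in _ <= X](bigID Q) /=.
apply: ler_wpDr.
  apply: sumr_ge0 => f _; apply: mulr_ge0; first by rewrite invr_ge0 ltW.
  by apply: prodr_ge0 => i _; rewrite mulr_ge0.
apply: ler_sum => f Qf.
rewrite big_split /= mulrA.
rewrite mulrAC -[X in X <= _]mul1r; apply: ler_wpM2r.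
  by apply: prodr_ge0.
by rewrite mulrC ler_pdivlMr // mul1r.
Qed.

Lemma mQ N (Q : pred {ffun 'I_N -> bool}) : measurable [set t | Q (Vt N t)].
Proof.
have -> : [set t | Q (Vt N t)] = \bigcup_(f in [set` Q]) [set t | Vt N t = f].
  apply/seteqP; split => t /=.
    by move=> Qt; exists (Vt N t).
  by move=> [f /= Qf ->].
apply: fin_bigcup_measurable.
  by apply: (@finite_finset {ffun 'I_N -> bool}).
by move=> f _; apply: mVt.
Qed.

Lemma mprod (N : nat) (u : nat -> bool -> R) (a : R) :
  measurable [set t | (a <= \prod_(i < N) u i (dv i.+1 t))%R].
Proof.
pose Q := fun f : {ffun 'I_N -> bool} => a <= \prod_(i < N) u i (f i).
have -> : [set t | (a <= \prod_(i < N) u i (dv i.+1 t))%R] = [set t | Q (Vt N t)].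
  have E t : \prod_(i < N) u i (Vt N t i) = \prod_(i < N) u i (dv i.+1 t).
    by apply: eq_bigr => i _; rewrite ffunE.
  by apply/seteqP; split => t /=; rewrite /Q E.
exact: mQ.
Qed.
End prodmeas.

Lemma block_sum (R : realType) (b : R) (n m : nat) : (0 < n)%N ->
  \sum_(0 <= N < m * n) b ^+ (N %/ n) = n%:R * \sum_(0 <= a < m) b ^+ a.
Proof.
move=> n0; elim: m => [|m IH]; first by rewrite mul0n !big_geq ?mulr0.
rewrite mulSnr (big_cat_nat _ (leq_addr _ _)) //= IH.
rewrite big_nat_recr //= mulrDr; congr (_ + _).
rewrite (eq_big_nat _ _ (F2 := fun _ => b ^+ m)); last first.
  move=> i /andP[h1 h2]; congr (_ ^+ _); apply/eqP; rewrite eqn_leq.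
  by rewrite -ltnS ltn_divLR // mulSnr h2 leq_divRL.
by rewrite sumr_const_nat addKn mulr_natl.
Qed.

Lemma geo_le (R : realType) (b : R) (m : nat) : 0 <= b < 1 ->
  \sum_(0 <= a < m) b ^+ a <= (1 - b)^-1.
Proof.
move=> /andP[b0 b1].
have h : (1 - b) * \sum_(0 <= a < m) b ^+ a = 1 - b ^+ m.
  rewrite big_mkord; have := subrX1 b m.
  move=> E; have -> : 1 - b ^+ m = - (b ^+ m - 1) by rewrite opprB.
  by rewrite E -mulNr opprB.
have hb : 0 < 1 - b by rewrite subr_gt0.
rewrite -(ler_pM2l hb) h mulfV ?gt_eqF //.
by rewrite lerBlDr lerDl exprn_ge0.
Qed.

Lemma partial_le (R : realType) (b : R) (n K : nat) : (0 < n)%N -> 0 <= b < 1 ->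
  \sum_(0 <= N < K) b ^+ (N %/ n) <= n%:R * (1 - b)^-1.
Proof.
move=> n0 /[dup] hb /andP[b0 b1].
apply: (@le_trans _ _ (\sum_(0 <= N < K * n) b ^+ (N %/ n))).
  rewrite [X in _ <= X](big_cat_nat _ (n := K)) //=; last by rewrite leq_pmulr.
  by rewrite lerDl sumr_ge0 // => i _; rewrite exprn_ge0.
by rewrite block_sum // ler_wpM2l // geo_le.
Qed.

Lemma BC d (T : measurableType d) (R : realType) (P : probability T R)
  (A : nat -> set T) (b : R) (n : nat) :
  (0 < n)%N -> 0 <= b < 1 -> (forall N, measurable (A N)) ->
  (forall N, (P (A N) <= (b ^+ (N %/ n))%:E)%E) ->
  {ae P, forall t, \forall N \near \oo, ~ A N t}.
Proof.
move=> n0 hb mA PA.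
have mL : measurable (lim_sup_set A).
  by apply: bigcap_measurableType => k _; apply: bigcup_measurable => j _.
have L0 : P (lim_sup_set A) = 0.
  apply: lim_sup_set_cvg0 => //.
  apply: (@le_lt_trans _ _ (\sum_(0 <= N <oo) (b ^+ (N %/ n))%:E)%E).
    by apply: lee_nneseries => // N _; apply: PA.
  apply: (@le_lt_trans _ _ ((n%:R * (1 - b)^-1)%:E)%E); last exact: ltry.
  apply: lime_le.
    by apply: is_cvg_nneseries => N _ _; rewrite lee_fin exprn_ge0 //; case/andP: hb.
  by apply: nearW => K; rewrite sumEFin lee_fin partial_le.
exists (lim_sup_set A); split => // t /= H m _.
apply: contrapT => Hn; apply: H.
exists m => // j /= jm Ajt; by apply: Hn; exists j.
Qed.

Lemma sqrt_ratio (R : realType) (x y : R) : 0 < x -> 0 < y ->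
  y * Num.sqrt (x / y) = Num.sqrt x * Num.sqrt y.
Proof.
move=> x0 y0.
rewrite sqrtrM ?ltW // sqrtrV ?ltW //.
have sy : 0 < Num.sqrt y by rewrite sqrtr_gt0.
rewrite -{1}(sqr_sqrtr (ltW y0)); field; exact: lt0r_neq0.
Qed.

Lemma am_gm (R : realType) (x y : R) : 0 <= x -> 0 <= y ->
  Num.sqrt x * Num.sqrt y <= (x + y) / 2.
Proof.
move=> x0 y0.
have hx := sqr_sqrtr x0; have hy := sqr_sqrtr y0.
have h := sqr_ge0 (Num.sqrt x - Num.sqrt y).
set a := Num.sqrt x in hx h *; set b := Num.sqrt y in hy h *.
rewrite -hx -hy; nra.
Qed.

Lemma am_gm_lt (R : realType) (x y : R) : 0 <= x -> 0 <= y -> x != y ->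
  Num.sqrt x * Num.sqrt y < (x + y) / 2.
Proof.
move=> x0 y0 xy.
have hx := sqr_sqrtr x0; have hy := sqr_sqrtr y0.
have ab : Num.sqrt x != Num.sqrt y.
  by apply: contra xy => /eqP e; rewrite -hx -hy e.
have h : 0 < (Num.sqrt x - Num.sqrt y) ^+ 2.
  by rewrite exprn_even_gt0 // subr_eq0.
set a := Num.sqrt x in hx h ab *; set b := Num.sqrt y in hy h ab *.
rewrite -hx -hy; nra.
Qed.

Definition rho (R : realType) (x y : R) :=
  y * Num.sqrt (x / y) + (1 - y) * Num.sqrt ((1 - x) / (1 - y)).

Lemma rho_ge0 (R : realType) (x y : R) : 0 < x < 1 -> 0 < y < 1 -> 0 <= rho x y.
Proof.
move=> /andP[x0 x1] /andP[y0 y1]; rewrite /rho.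
by apply: addr_ge0; apply: mulr_ge0; rewrite ?sqrtr_ge0 // ?subr_ge0 ltW.
Qed.

Lemma rho_le1 (R : realType) (x y : R) : 0 < x < 1 -> 0 < y < 1 -> rho x y <= 1.
Proof.
move=> /andP[x0 x1] /andP[y0 y1]; rewrite /rho !sqrt_ratio ?subr_gt0 //.
have := am_gm (ltW x0) (ltW y0).
have hx1 : 0 <= 1 - x by rewrite subr_ge0 ltW.
have hy1 : 0 <= 1 - y by rewrite subr_ge0 ltW.
have := am_gm hx1 hy1.
lra.
Qed.

Lemma rho_lt1 (R : realType) (x y : R) : 0 < x < 1 -> 0 < y < 1 -> x != y -> rho x y < 1.
Proof.
move=> /andP[x0 x1] /andP[y0 y1] xy; rewrite /rho !sqrt_ratio ?subr_gt0 //.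
have := am_gm_lt (ltW x0) (ltW y0) xy.
have hx1 : 0 <= 1 - x by rewrite subr_ge0 ltW.
have hy1 : 0 <= 1 - y by rewrite subr_ge0 ltW.
have := am_gm hx1 hy1.
lra.
Qed.

Lemma prod_period (R : realType) (r : nat -> R) (n k0 : nat) :
  (k0 < n)%N -> (forall k, 0 <= r k <= 1) -> (forall k, r (k + n)%N = r k) ->
  forall m N, (m * n <= N)%N -> \prod_(0 <= k < N) r k <= r k0 ^+ m.
Proof.
move=> k0n r01 rper m; elim: m => [|m IH] N hN.
  rewrite expr0; apply: prodr_ile1 => k _; exact: r01.
have nN : (n <= N)%N by apply: leq_trans hN; rewrite mulSn leq_addr.
rewrite (big_cat_nat _ (n := n)) //= exprS.
have r0 k : 0 <= r k by case/andP: (r01 k).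
apply: ler_pM.
- by apply: prodr_ge0.
- by apply: prodr_ge0.
- rewrite big_mkord (bigD1 (Ordinal k0n)) //= -[X in _ <= X]mulr1.
  apply: ler_pM => //; first by apply: prodr_ge0.
  by apply: prodr_ile1 => k _; exact: r01.
- rewrite -{1}[n]add0n big_addn.
  under eq_bigr do rewrite rper.
  apply: IH; rewrite leq_subRL // addnC -mulSn //.
Qed.

Lemma divn_cvg (n : nat) : (0 < n)%N -> (fun N => (N %/ n)%N) @ \oo --> \oo.
Proof.
move=> n0 P [m _ HP]; exists (m * n)%N => // N /= hN; apply: HP.
by rewrite /= leq_divRL.
Qed.

Lemma geom_div_cvg (R : realType) (g : R) (n : nat) : (0 < n)%N -> 0 <= g < 1 ->
  g ^+ (N %/ n) @[N --> \oo] --> 0.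
Proof.
move=> n0 /andP[g0 g1].
apply: (cvg_comp _ _ (divn_cvg n0)).
by apply: cvg_expr; rewrite ger0_norm.
Qed.

Lemma lik_gt0 (R : realType) (q : nat) (l : 'rV[R]_q -> 'rV[R]_q -> R) b x y :
  (forall x y, 0 < l x y < 1) -> 0 < lik l b x y.
Proof.
move=> hl; rewrite /lik; case: b; have /andP[h1 h2] := hl x y => //.
by rewrite subr_gt0.
Qed.

Definition Wp (R : realType) (q M : nat) (l : 'rV[R]_q -> 'rV[R]_q -> R)
  (c : 'I_M -> 'rV[R]_q) (xi : nat -> 'rV[R]_q) (dd : nat -> bool) N i :=
  \prod_(k < N) lik l (dd k.+1) (c i) (xi k.+1).

Lemma Wp_gt0 (R : realType) (q M : nat) (l : 'rV[R]_q -> 'rV[R]_q -> R)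
  (c : 'I_M -> 'rV[R]_q) (xi : nat -> 'rV[R]_q) (dd : nat -> bool) N i :
  (forall x y, 0 < l x y < 1) -> 0 < Wp l c xi dd N i.
Proof. by move=> hl; apply: prodr_gt0 => k _; apply: lik_gt0. Qed.

Lemma Z_gt0 (R : realType) (q M : nat) (l : 'rV[R]_q -> 'rV[R]_q -> R)
  (c : 'I_M -> 'rV[R]_q) (xi : nat -> 'rV[R]_q) (dd : nat -> bool) (p0 : 'I_M -> R) (j : 'I_M) N :
  (forall x y, 0 < l x y < 1) -> (forall i, 0 < p0 i) ->
  0 < \sum_(m < M) p0 m * Wp l c xi dd N m.
Proof.
move=> hl hp; rewrite (bigD1 j) //=; apply: ltr_pwDl.
  by rewrite mulr_gt0 ?Wp_gt0.
by apply: sumr_ge0 => m _; rewrite mulr_ge0 ?ltW ?Wp_gt0.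
Qed.

Lemma post_formula (R : realType) (q M : nat) (l : 'rV[R]_q -> 'rV[R]_q -> R)
  (c : 'I_M -> 'rV[R]_q) (p0 : 'I_M -> R) (xi : nat -> 'rV[R]_q) (dd : nat -> bool) (j : 'I_M) :
  (forall x y, 0 < l x y < 1) -> (forall i, 0 < p0 i) -> \sum_(i < M) p0 i = 1 ->
  forall N i, posterior l c p0 xi dd N i =
    p0 i * Wp l c xi dd N i / \sum_(m < M) p0 m * Wp l c xi dd N m.
Proof.
move=> hl hp hs; elim=> [|N IH] i.
  rewrite /Wp /= big_ord0 mulr1; under eq_bigr do rewrite big_ord0 mulr1.
  by rewrite hs divr1.
rewrite /= IH.
have Z0 := @Z_gt0 R q M l c xi dd p0 j N hl hp.
set Z := \sum_(m < M) p0 m * Wp l c xi dd N m in Z0 *.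
have E m : Wp l c xi dd N.+1 m = Wp l c xi dd N m * lik l (dd N.+1) (c m) (xi N.+1).
  by rewrite /Wp big_ord_recr.
under eq_bigr do rewrite IH mulrA.
rewrite -mulr_suml E.
under [X in _ = _ / X]eq_bigr do rewrite E.
have -> : \sum_(m < M) p0 m * (Wp l c xi dd N m * lik l (dd N.+1) (c m) (xi N.+1)) =
  \sum_(m < M) lik l (dd N.+1) (c m) (xi N.+1) * (p0 m * Wp l c xi dd N m).
  by apply: eq_bigr => m _; ring.
have Y0 : 0 < \sum_(m < M) lik l (dd N.+1) (c m) (xi N.+1) * (p0 m * Wp l c xi dd N m).
  rewrite (bigD1 j) //=; apply: ltr_pwDl.
    by rewrite !mulr_gt0 ?Wp_gt0 ?lik_gt0.
  by apply: sumr_ge0 => m _; rewrite !mulr_ge0 ?ltW ?Wp_gt0 ?lik_gt0.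
rewrite -/Z.
move: Z0 Y0; set Y := \sum_(m < M) _ => Z0 Y0.
field; apply/andP; split; exact: lt0r_neq0.
Qed.

Lemma final_cvg (R : realType) (q M : nat) (l : 'rV[R]_q -> 'rV[R]_q -> R)
  (c : 'I_M -> 'rV[R]_q) (p0 : 'I_M -> R) (xi : nat -> 'rV[R]_q) (dd : nat -> bool) (j : 'I_M) :
  (forall x y, 0 < l x y < 1) -> (forall i, 0 < p0 i) -> \sum_(i < M) p0 i = 1 ->
  (forall i, i != j -> (Wp l c xi dd N i / Wp l c xi dd N j) @[N --> \oo] --> (0 : R)) ->
  posterior l c p0 xi dd N j @[N --> \oo] --> (1 : R).
Proof.
move=> hl hp hs hW.
set W := Wp l c xi dd.
have E N : posterior l c p0 xi dd N j =
    (1 + \sum_(m < M | m != j) p0 m / p0 j * (W N m / W N j))^-1.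
  rewrite (@post_formula R q M l c p0 xi dd j hl hp hs) (bigD1 j) //=.
  have W0 : 0 < W N j by apply: Wp_gt0.
  have p0j := hp j.
  have S0 : 0 <= \sum_(m < M | m != j) p0 m * W N m.
    by apply: sumr_ge0 => m _; rewrite mulr_ge0 ?ltW ?hp ?Wp_gt0.
  have -> : \sum_(m < M | m != j) p0 m / p0 j * (W N m / W N j) =
      (\sum_(m < M | m != j) p0 m * W N m) / (p0 j * W N j).
    rewrite mulr_suml; apply: eq_bigr => m _; field.
    by apply/andP; split; apply: lt0r_neq0.
  move: S0; set S := \sum_(m < M | m != j) _ => S0.
  have T0 : 0 < p0 j * W N j + S by rewrite ltr_pwDl // mulr_gt0.
  rewrite -/W; field.
  by rewrite (lt0r_neq0 p0j) (lt0r_neq0 W0) (lt0r_neq0 T0).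
under eq_cvg do rewrite E.
have e0 : \sum_(m < M | m != j) p0 m / p0 j * (W N m / W N j) @[N --> \oo] --> (0 : R).
  have := @cvg_big R 'I_M +%R 0 (fun m => m != j) add_continuous nat \oo (index_enum _)
    (fun m N => p0 m / p0 j * (W N m / W N j)) (fun=> 0) _ _.
  rewrite big1 //; apply => //.
  move=> m mj; rewrite -(mulr0 (p0 m / p0 j)); apply: cvgMr; exact: hW.
have := cvgV _ (cvgD (cvg_cst (1 : R)) e0).
rewrite addr0 invr1; apply; exact: oner_neq0.
Qed.

Unset Implicit Arguments. Set Strict Implicit. Set Printing Implicit Defensive.

Theorem corollary1 (R : realType) (q : nat) (S : set 'rV[R]_q)
  (l : 'rV[R]_q -> 'rV[R]_q -> R) (s : 'rV[R]_q) (xi : nat -> 'rV[R]_q)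
  (n : nat) (dsp : measure_display) (T : measurableType dsp)
  (P : probability T R) (dv : nat -> T -> bool) (M : nat)
  (c : 'I_M -> 'rV[R]_q) (p0 : 'I_M -> R) (j : 'I_M) :
  compact S ->
  continuous (fun z : 'rV[R]_q * 'rV[R]_q => l z.1 z.2) ->
  (forall x y, 0 < l x y < 1) ->
  S s ->
  (0 < n)%N ->
  (forall k, xi (k + n)%N = xi k) ->
  (forall k, measurable_fun setT (dv k)) ->
  mutually_independent P (fun k => dv k.+1) ->
  (forall k, (1 <= k)%N -> P [set t | dv k t = true] = (l s (xi k))%:E) ->
  (forall i, S (c i)) ->
  injective c ->
  (forall i, 0 < p0 i < 1) ->
  \sum_(i < M) p0 i = 1 ->
  c j = s ->
  \bigcap_(k in [set k | (1 <= k <= n)%N]) [set x | S x /\ l x (xi k) = l s (xi k)]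
    = [set s] ->
  {ae P, forall t, posterior l c p0 xi (fun k => dv k t) k j @[k --> \oo] --> (1 : R)}.
Proof.
move=> _ _ hl Ss n0 hper hmeas hind hprob hcS hinj hp01 hsum hcj hid.
have hp i : 0 < p0 i by case/andP: (hp01 i).
pose pr k b := lik l b s (xi k.+1).
have mdv k (B : set bool) : measurable ((fun t => dv k t) @^-1` B).
  have mB : measurable B by [].
  by have := hmeas k measurableT _ mB; rewrite setTI.
have Hp k b : P [set t | dv k.+1 t = b] = (pr k b)%:E.
  case: b; first by rewrite hprob.
  have -> : [set t | dv k.+1 t = false] = ~` [set t | dv k.+1 t = true].
    by apply/seteqP; split => t /=; case: (dv k.+1 t).
  rewrite probability_setC; first by rewrite hprob // EFinB.
  exact: (mdv k.+1 [set true]).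
suff H : forall i, {ae P, forall t, i != j ->
    (Wp l c xi (fun k => dv k t) N i / Wp l c xi (fun k => dv k t) N j) @[N --> \oo] --> (0 : R)}.
  have := @filter_forall T 'I_M _ (almost_everywhere P) _ H.
  move=> /(_ (ae_filter_ringOfSetsType P)) Hall.
  apply: filterS Hall => t Ht.
  by apply: (final_cvg hl hp hsum) => i ij; apply: Ht.
move=> i; have [ij|ij] := eqVneq i j.
  by apply: aeW.
have [kk [hkk hlk]] : exists kk, (1 <= kk <= n)%N /\ l (c i) (xi kk) != l s (xi kk).
  apply: contrapT => Hno.
  have : [set s] (c i).
    rewrite -hid => k /= hk; split => //; apply/eqP.
    by apply: contrapT => hne; apply: Hno; exists k; split => //; apply/negP.
  by move=> /= ci; move: ij; rewrite -hcj in ci; rewrite (hinj _ _ ci) eqxx.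
have [k0 k0S k0n] : exists2 k0, k0.+1 = kk & (k0 < n)%N.
  by case: kk hkk {hlk} => // k /andP[_ h]; exists k.
pose u k b := Num.sqrt (lik l b (c i) (xi k.+1) / lik l b s (xi k.+1)).
pose r k := \sum_(b : bool) pr k b * u k b.
have rE k : r k = rho (l (c i) (xi k.+1)) (l s (xi k.+1)).
  by rewrite /r big_bool /= /pr /u /lik /rho.
have r01 k : 0 <= r k <= 1 by rewrite rE rho_ge0 ?rho_le1.
have rper k : r (k + n)%N = r k.
  by rewrite !rE -addSn hper.
have r0lt : r k0 < 1 by rewrite rE rho_lt1 // k0S.
set r0 := r k0 in r0lt.
have r00 : 0 <= r0 by case/andP: (r01 k0).
pose g := (1 + r0) / 2.
have g0 : 0 < g by rewrite /g; lra.
have g1 : g < 1 by rewrite /g; lra.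
have rg : r0 < g by rewrite /g; lra.
pose beta := r0 / g.
have hb : 0 <= beta < 1.
  have h1 : r0 / g < 1 by rewrite ltr_pdivrMr // mul1r.
  apply/andP; split => //.
  by rewrite /beta divr_ge0 ?(ltW g0).
pose A N := [set t | (g ^+ (N %/ n) <= \prod_(k < N) u k (dv k.+1 t))%R].
have mA N : measurable (A N) by apply: mprod.
have PA N : (P (A N) <= (beta ^+ (N %/ n))%:E)%E.
  apply: le_trans (markovV hind hmeas Hp _ _ _ _) _.
  - by rewrite exprn_gt0.
  - by move=> k b; apply: sqrtr_ge0.
  - by move=> k b; apply: ltW; apply: lik_gt0.
  have hpr : \prod_(k < N) \sum_b pr k b * u k b <= r0 ^+ (N %/ n).
    by have := prod_period k0n r01 rper (leq_trunc_div N n); rewrite big_mkord.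
  rewrite lee_fin /beta [X in _ <= X]exprMn -exprVn mulrC.
  by apply: ler_wpM2r => //; rewrite exprn_ge0 // invr_ge0 ltW.
have := BC n0 hb mA PA.
apply: filterS => t Ht _.
have E N : Wp l c xi (fun k => dv k t) N i / Wp l c xi (fun k => dv k t) N j =
    (\prod_(k < N) u k (dv k.+1 t)) ^+ 2.
  rewrite /Wp -prodf_div -prodrXl; apply: eq_bigr => k _.
  rewrite /u sqr_sqrtr -hcj //.
  by apply: divr_ge0; apply: ltW; exact: lik_gt0.
under eq_cvg do rewrite E.
apply: (@squeeze_cvgr _ _ _ _ (fun=> 0) (fun N => g ^+ (N %/ n))); last first.
- by apply: geom_div_cvg => //; rewrite g1 ltW.
- exact: cvg_cst.
move: Ht; apply: filterS => N /negP; rewrite /A /= -ltNge => hN.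
have H0 : 0 <= \prod_(k < N) u k (dv k.+1 t).
  by apply: prodr_ge0 => k _; apply: sqrtr_ge0.
have gm1 : g ^+ (N %/ n) <= 1 by rewrite exprn_ile1 // ltW.
rewrite exprn_ge0 //= expr2 -[X in _ <= X]mul1r.
by apply: ler_pM => //; [exact: le_trans (ltW hN) gm1 | exact: ltW].
Qed.
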